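(* For the $n$-sun $S_n$, $n\ge 3$: $b(S_3)=1$, $b(S_n)=2$ for all $n\ge 4$, and $b^m(S_n)=2$ for all $n\ge 3$.
   Context: For $n\ge 3$, the $n$-sun $S_n$ is the graph with vertex set $\{x_1,\dots,x_n,y_1,\dots,y_n\}$ and edge set consisting of all edges $\{x_i,x_j\}$ for $1\le i<j\le n$, the edges $\{x_i,y_i\},\{x_{i+1},y_i\}$ for $1\le i<n$, and the edges $\{x_1,y_n\},\{x_n,y_n\}$. An EPG representation of a graph is a set of paths on a rectangular grid (sequences of grid points joined consecutively by grid edges), one per vertex, such that two vertices are adjacent iff their paths share a grid edge. A bend is a point of a path where a horizontal and a vertical grid edge of the path meet; a path is monotonic if it is ascending in both columns and rows. $B_k$ ($B_k^m$) is the class of graphs having an EPG representation in which every path has at most $k$ bends (and is monotonic). The bend number $b(G)$ is the smallest $k\in\mathbb{N}$ with $G\in B_k$, and the monotonic bend number $b^m(G)$ is the smallest $k\in\mathbb{N}$ with $G\in B_k^m$. *)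

(* Defs.v *)
From mathcomp Require Import all_boot.
Set Implicit Arguments. Unset Strict Implicit. Unset Printing Implicit Defensive.

(* Grid points: (column, row) in nat * nat (every finite rectangular grid
   embeds, up to translation). *)
Definition point := (nat * nat)%type.

Definition grid_adj (a b : point) : bool :=
  ((a.1 == b.1) && ((a.2.+1 == b.2) || (b.2.+1 == a.2))) ||
  ((a.2 == b.2) && ((a.1.+1 == b.1) || (b.1.+1 == a.1))).

Definition grid_path (s : seq point) : bool := sorted grid_adj s && uniq s.

Definition horiz (a b : point) : bool := a.2 == b.2.

Fixpoint bends (s : seq point) : nat :=
  match s with
  | a :: ((b :: c :: _) as t) => (horiz a b != horiz b c) + bends t
  | _ => 0
  end.

Definition monotonic (s : seq point) : bool :=
  sorted (fun a b : point => (b == (a.1.+1, a.2)) || (b == (a.1, a.2.+1))) s.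

Definition path_edges (s : seq point) : seq (point * point) := zip s (behead s).

Definition same_edge (e f : point * point) : bool :=
  ((e.1 == f.1) && (e.2 == f.2)) || ((e.1 == f.2) && (e.2 == f.1)).

Definition share_edge (s t : seq point) : bool :=
  has (fun e => has (same_edge e) (path_edges t)) (path_edges s).

Definition EPG_rep (V : finType) (adj : rel V) (P : V -> seq point) : Prop :=
  (forall v, grid_path (P v)) /\
  (forall u v, u != v -> adj u v = share_edge (P u) (P v)).

Definition in_B (k : nat) (V : finType) (adj : rel V) : Prop :=
  exists P : V -> seq point, EPG_rep adj P /\ (forall v, bends (P v) <= k).

Definition in_Bm (k : nat) (V : finType) (adj : rel V) : Prop :=
  exists P : V -> seq point,
    EPG_rep adj P /\ (forall v, bends (P v) <= k /\ monotonic (P v)).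

Definition bend_number (V : finType) (adj : rel V) (k : nat) : Prop :=
  in_B k adj /\ (forall j, j < k -> ~ in_B j adj).

Definition mono_bend_number (V : finType) (adj : rel V) (k : nat) : Prop :=
  in_Bm k adj /\ (forall j, j < k -> ~ in_Bm j adj).

(* The n-sun: inl i = x_(i+1), inr i = y_(i+1) (0-indexed);
   x's form a clique, y_i is adjacent to x_i and x_(i+1 mod n). *)
Definition sun_adj (n : nat) (u v : 'I_n + 'I_n) : bool :=
  match u, v with
  | inl i, inl j => i != j
  | inl i, inr k => (val i == val k) || (val i == k.+1 %% n)
  | inr k, inl i => (val i == val k) || (val i == k.+1 %% n)
  | inr _, inr _ => false
  end.
Arguments sun_adj n : clear implicits.

(* Main.v *)
Require Import Defs.
From mathcomp Require Import all_boot zify.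
From Stdlib Require Import ZArith Lia Classical IndefiniteDescription.
Set Implicit Arguments. Unset Strict Implicit. Unset Printing Implicit Defensive.

Lemma adjP (p q : point) : grid_adj p q <->
  (p.1 = q.1 /\ (p.2.+1 = q.2 \/ q.2.+1 = p.2)) \/ (p.2 = q.2 /\ (p.1.+1 = q.1 \/ q.1.+1 = p.1)).
Proof.
rewrite /grid_adj; split.
- move=> /orP [/andP [/eqP h /orP [/eqP h'|/eqP h']] | /andP [/eqP h /orP [/eqP h'|/eqP h']]]; lia.
- case=> [[h [h'|h']]|[h [h'|h']]]; rewrite h h' !eqxx /= ?orbT //.
Qed.

Definition ekey (e : point * point) : bool * nat * nat :=
  if e.1.2 == e.2.2 then (true, minn e.1.1 e.2.1, e.1.2) else (false, e.1.1, minn e.1.2 e.2.2).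

Lemma same_edge_key (e f : point * point) : grid_adj e.1 e.2 -> grid_adj f.1 f.2 ->
  same_edge e f = (ekey e == ekey f).
Proof.
case: e => [[a b] [c d]]; case: f => [[a' b'] [c' d']] /= /adjP /= h1 /adjP /= h2.
rewrite /same_edge /ekey /= !xpair_eqE.
case: (b =P d) => e1; case: (b' =P d') => e2; rewrite /= ?xpair_eqE /=; lia.
Qed.

Definition K (s : seq point) := map ekey (path_edges s).

Lemma edges_adj s e : sorted grid_adj s -> e \in path_edges s -> grid_adj e.1 e.2.
Proof.
elim: s => [|a [|b s] IH] //= /andP [ab Hs].
rewrite /path_edges /= inE => /orP [/eqP -> //|].
by apply: IH.
Qed.

Lemma share_K s t : sorted grid_adj s -> sorted grid_adj t ->
  share_edge s t = has (mem (K t)) (K s).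
Proof.
move=> Hs Ht; rewrite /share_edge /K has_map.
apply: eq_in_has => e He /=.
rewrite (@eq_in_has _ _ (fun f => ekey e == ekey f)); last first.
  by move=> f Hf; apply: same_edge_key; [apply: edges_adj Hs He | apply: edges_adj Ht Hf].
by rewrite -has_pred1 has_map; apply: eq_has => f /=; rewrite eq_sym.
Qed.

Definition onseg (u v z : point) : Prop :=
  (u.1 = v.1 /\ z.1 = u.1 /\ minn u.2 v.2 <= z.2 <= maxn u.2 v.2) \/
  (u.2 = v.2 /\ z.2 = u.2 /\ minn u.1 v.1 <= z.1 <= maxn u.1 v.1).
Definition hseg (u v : point) x y : Prop :=
  u.2 = v.2 /\ y = u.2 /\ minn u.1 v.1 <= x < maxn u.1 v.1.
Definition vseg (u v : point) x y : Prop :=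
  u.1 = v.1 /\ x = u.1 /\ minn u.2 v.2 <= y < maxn u.2 v.2.
Definition aligned (u v : point) : Prop := u.1 = v.1 \/ u.2 = v.2.

Definition Ldesc (p : point) (s : seq point) (k : point) : Prop :=
  let q := last p s in
  aligned p k /\ aligned k q /\ (p.1 = k.1 \/ k.1 = q.1) /\ (p.2 = k.2 \/ k.2 = q.2) /\
  (forall z, z \in p :: s <-> onseg p k z \/ onseg k q z) /\
  (forall x y, (true, x, y) \in K (p :: s) <-> hseg p k x y \/ hseg k q x y) /\
  (forall x y, (false, x, y) \in K (p :: s) <-> vseg p k x y \/ vseg k q x y) /\
  (forall p' s', s = p' :: s' -> onseg p k p' /\ k <> p) /\
  (bends (p :: s) = 0 -> k = q) /\
  (monotonic (p :: s) -> p.1 <= k.1 /\ p.2 <= k.2 /\ k.1 <= q.1 /\ k.2 <= q.2).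

Lemma key_adj (p p' : point) x y : grid_adj p p' ->
  (((true, x, y) == ekey (p, p')) <-> hseg p p' x y) /\
  (((false, x, y) == ekey (p, p')) <-> vseg p p' x y).
Proof.
case: p => a b; case: p' => c d /adjP /= h.
rewrite /ekey /hseg /vseg /=.
case: (b =P d) => e; rewrite /= xpair_eqE /= ?xpair_eqE /=; split; split; lia.
Qed.

Lemma onseg_adj (p p' z : point) : grid_adj p p' -> onseg p p' z <-> z = p \/ z = p'.
Proof.
case: p => a b; case: p' => c d; case: z => u v /adjP /= h; rewrite /onseg /=.
split.
- move=> H; have [[-> ->]|[-> ->]] : (u = a /\ v = b) \/ (u = c /\ v = d) by lia.
  + by left.
  + by right.
- case=> [[-> ->]|[-> ->]]; lia.
Qed.

Lemma horizP (p q : point) : horiz p q = (p.2 == q.2). Proof. by []. Qed.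

Lemma ext_step (p p' p'' k : point) :
  grid_adj p p' -> grid_adj p' p'' -> horiz p p' = horiz p' p'' -> aligned p' k ->
  onseg p' k p'' -> ~ onseg p' k p ->
  aligned p k /\ (forall z, onseg p k z <-> z = p \/ onseg p' k z) /\
  (forall x y, hseg p k x y <-> hseg p p' x y \/ hseg p' k x y) /\
  (forall x y, vseg p k x y <-> vseg p p' x y \/ vseg p' k x y) /\
  onseg p k p' /\ k <> p /\ (p.1 = k.1 <-> p'.1 = k.1) /\ (p.2 = k.2 <-> p'.2 = k.2).
Proof.
case: p => a b; case: p' => c d; case: p'' => e f; case: k => g h.
move=> /adjP /= h1 /adjP /= h2; rewrite !horizP /=.
move=> H; have hor : (b = d <-> d = f) by move: H; case: eqP; case: eqP => ? ? //; lia.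
rewrite /aligned /onseg /hseg /vseg /= => al on non.
case: h1 => [[e1 [e2|e2]]|[e1 [e2|e2]]]; case: h2 => [[e3 [e4|e4]]|[e3 [e4|e4]]];
  try (exfalso; clear -hor e1 e2 e3 e4; lia);
  try (exfalso; clear -on non e1 e2 e3 e4; lia).
all: subst.
all: split; [lia|split; [|split; [|split; [|split; [lia|split; [|lia]]]]]].
all: try (by case=> ? ?; lia).
all: try (by move=> x y; lia).
all: move=> [u v] /=; split; [|case=> [[-> ->]|]; lia].
all: rewrite pair_equal_spec; lia.
Qed.

Lemma corner_step (p p' p'' q : point) :
  grid_adj p p' -> grid_adj p' p'' -> horiz p p' != horiz p' p'' -> aligned p' q ->
  onseg p' q p'' -> (p.1 = p'.1 \/ p'.1 = q.1) /\ (p.2 = p'.2 \/ p'.2 = q.2).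
Proof.
case: p => a b; case: p' => c d; case: p'' => e f; case: q => g h.
move=> /adjP /= h1 /adjP /= h2; rewrite !horizP /=.
move=> H; have hor : ~ (b = d <-> d = f) by move: H; case: eqP; case: eqP => ? ? //; lia.
rewrite /aligned /onseg /= => al on.
case: h1 => [[e1 [e2|e2]]|[e1 [e2|e2]]]; case: h2 => [[e3 [e4|e4]]|[e3 [e4|e4]]];
  try (exfalso; clear -hor e1 e2 e3 e4; lia).
all: subst; lia.
Qed.

Lemma in_cons' (z p : point) l : z \in p :: l <-> z = p \/ z \in l.
Proof.
rewrite inE; split.
- by case/orP => [/eqP ->|]; [left|right].
- by case=> [->|h]; [rewrite eqxx | rewrite h orbT].
Qed.

Lemma in_nil' (z : point) : z \in [::] <-> False. Proof. by []. Qed.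

Lemma K_cons p p' s : K (p :: p' :: s) = ekey (p, p') :: K (p' :: s).
Proof. by []. Qed.

Lemma inK_cons (b : bool) x y p p' s :
  (b, x, y) \in K (p :: p' :: s) <-> (b, x, y) == ekey (p, p') \/ (b, x, y) \in K (p' :: s).
Proof. by rewrite K_cons inE; split => /orP. Qed.

Lemma onseg_l u v : aligned u v -> onseg u v u.
Proof. rewrite /aligned /onseg; lia. Qed.
Lemma onseg_r u v : aligned u v -> onseg u v v.
Proof. rewrite /aligned /onseg; lia. Qed.
Lemma onseg_pt (u z : point) : onseg u u z <-> z = u.
Proof.
case: u => a b; case: z => c d; rewrite /onseg /=; split.
- by move=> H; have [-> ->] : c = a /\ d = b by lia.
- by case=> -> ->; lia.
Qed.
Lemma hseg_pt u x y : ~ hseg u u x y. Proof. rewrite /hseg; lia. Qed.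
Lemma vseg_pt u x y : ~ vseg u u x y. Proof. rewrite /vseg; lia. Qed.

Lemma mstep (p p' : point) :
  (p' == (p.1.+1, p.2)) || (p' == (p.1, p.2.+1)) -> p.1 <= p'.1 /\ p.2 <= p'.2.
Proof. case: p' => c d; rewrite !xpair_eqE /=; lia. Qed.

Lemma adj_aligned (p p' : point) : grid_adj p p' -> aligned p p'.
Proof. case: p => a b; case: p' => c d /adjP /=; rewrite /aligned /=; lia. Qed.

Lemma adj_neq (p p' : point) : grid_adj p p' -> p' <> p.
Proof. case: p => a b; case: p' => c d /adjP /= h [e1 e2]; lia. Qed.

Lemma Lmain s (p : point) : grid_path (p :: s) -> bends (p :: s) <= 1 -> exists k, Ldesc p s k.
Proof.
elim: s p => [|p' s IH] p.
- move=> _ _; exists p; rewrite /Ldesc /=.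
  split; first by left. split; first by left. split; first by left. split; first by left.
  split. move=> z; rewrite in_cons' in_nil onseg_pt; split; case=> // ->; by left.
  split. move=> x y; rewrite in_nil; split=> //; case=> /hseg_pt [].
  split. move=> x y; rewrite in_nil; split=> //; case=> /vseg_pt [].
  split. by [].
  split. by [].
  lia.
- rewrite /grid_path /= => /andP [/andP [adj srt] /andP [nin unq]] hb.
  case: s IH srt unq nin hb => [|p'' s] IH srt unq nin hb.
  + exists p'; rewrite /Ldesc /=.
    have al : aligned p p' := adj_aligned adj.
    split; first done. split; first by left. split; first by right. split; first by right.
    split. move=> z; rewrite in_cons' in_cons' in_nil' onseg_pt onseg_adj //; tauto.
    split. move=> x y; rewrite /K /= mem_seq1; split.
      by move/(proj1 (proj1 (key_adj x y adj))); left.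
      by case=> [/(proj2 (proj1 (key_adj x y adj)))|/hseg_pt].
    split. move=> x y; rewrite /K /= mem_seq1; split.
      by move/(proj1 (proj2 (key_adj x y adj))); left.
      by case=> [/(proj2 (proj2 (key_adj x y adj)))|/vseg_pt].
    split. move=> p0 s0 [<- _]; split; first by apply/onseg_adj => //; right.
      exact: adj_neq.
    split. by [].
    rewrite /monotonic /= andbT => /mstep; clear; lia.
  + have gp : grid_path (p' :: p'' :: s) by rewrite /grid_path; apply/andP; split.
    have adj2 : grid_adj p' p'' by move: srt => /= /andP [].
    have nin' : ~ (p \in p' :: p'' :: s) by apply/negP.
    move: hb; rewrite [bends _]/= => hb.
    case E : (horiz p p' != horiz p' p'') in hb.
    * have hb0 : bends (p' :: p'' :: s) = 0 by move: hb; clear; rewrite /=; lia.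
      have hb1 : bends (p' :: p'' :: s) <= 1 by rewrite hb0.
      case: (IH p' gp hb1) => k' [al1 [al2 [pp1 [pp2 [pts [hk [vk [sec [str mon]]]]]]]]].
      have ek : k' = last p' (p'' :: s) := str hb0.
      case: (sec p'' s erefl) => on2 nek.
      exists p'; rewrite /Ldesc /=.
      move: al1 al2 on2 pts hk vk mon; rewrite ek => al1 _ on2 pts hk vk mon.
      have al : aligned p p' := adj_aligned adj.
      have [c1 c2] := corner_step adj adj2 E al1 on2.
      split; first done. split; first done. split; first done. split; first done.
      split. move=> z; rewrite in_cons' pts (@onseg_pt (last p' (p'' :: s)) z) (@onseg_adj p p' z adj).
        split.
        - case=> [->|[h|->]]; first by left; left.
          + by right.
          + by right; apply: onseg_r.
        - case=> [[->|->]|h]; first by left.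
          + by right; left; apply: onseg_l.
          + by right; left.
      split. move=> x y; rewrite inK_cons hk.
        have := key_adj x y adj; have := @hseg_pt (last p' (p'' :: s)) x y; tauto.
      split. move=> x y; rewrite inK_cons vk.
        have := key_adj x y adj; have := @vseg_pt (last p' (p'' :: s)) x y; tauto.
      split. move=> p0 s0 [<- _]; split; first by apply/onseg_adj => //; right.
        exact: adj_neq.
      split. by rewrite E.
      rewrite /monotonic /= => /andP [/mstep st rest].
      have := mon rest; move: st; clear; rewrite /=; lia.
    * have hb' : bends (p' :: p'' :: s) <= 1 by move: hb; clear; rewrite /=; lia.
      case: (IH p' gp hb') => k' [al1 [al2 [pp1 [pp2 [pts [hk [vk [sec [str mon]]]]]]]]].
      case: (sec p'' s erefl) => on2 nek.
      have hE : horiz p p' = horiz p' p'' by move: E; case: (horiz p p') (horiz p' p'') => [] [].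
      have non : ~ onseg p' k' p by move=> h; apply: nin'; apply/pts; left.
      have [alk [segz [hs [vs [onp [kp [i1 i2]]]]]]] := ext_step adj adj2 hE al1 on2 non.
      exists k'; rewrite /Ldesc /=.
      split; first done. split; first done. split; first tauto. split; first tauto.
      split. move=> z; rewrite in_cons' pts segz; tauto.
      split. move=> x y; rewrite inK_cons hk hs.
        have := key_adj x y adj; tauto.
      split. move=> x y; rewrite inK_cons vk vs.
        have := key_adj x y adj; tauto.
      split. by move=> p0 s0 [<- _].
      split. by rewrite E /=; apply: str.
      rewrite /monotonic /= => /andP [/mstep st rest].
      have := mon rest; move: st; clear; rewrite /=; lia.
Qed.

Definition hI (p k q : point) : nat * nat :=
  if (p.2 == k.2) && (p.1 != k.1) then (minn p.1 k.1, maxn p.1 k.1)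
  else if k.2 == q.2 then (minn k.1 q.1, maxn k.1 q.1) else (0, 0).
Definition vI (p k q : point) : nat * nat :=
  if (p.1 == k.1) && (p.2 != k.2) then (minn p.2 k.2, maxn p.2 k.2)
  else if k.1 == q.1 then (minn k.2 q.2, maxn k.2 q.2) else (0, 0).

Lemma params_ok (p k q : point) : aligned p k -> aligned k q ->
  (p.1 = k.1 \/ k.1 = q.1) -> (p.2 = k.2 \/ k.2 = q.2) ->
  (forall x y, hseg p k x y \/ hseg k q x y <-> y = k.2 /\ (hI p k q).1 <= x < (hI p k q).2) /\
  (forall x y, vseg p k x y \/ vseg k q x y <-> x = k.1 /\ (vI p k q).1 <= y < (vI p k q).2) /\
  ((hI p k q).1 < (hI p k q).2 -> (vI p k q).1 < (vI p k q).2 ->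
     (k.1 = (hI p k q).1 \/ k.1 = (hI p k q).2) /\ (k.2 = (vI p k q).1 \/ k.2 = (vI p k q).2)) /\
  (k = q -> ~ ((hI p k q).1 < (hI p k q).2 /\ (vI p k q).1 < (vI p k q).2)) /\
  (p.1 <= k.1 -> p.2 <= k.2 -> k.1 <= q.1 -> k.2 <= q.2 ->
     (hI p k q).1 < (hI p k q).2 -> (vI p k q).1 < (vI p k q).2 ->
     (k.1 = (hI p k q).2 /\ (vI p k q).1 = k.2) \/ (k.1 = (hI p k q).1 /\ (vI p k q).2 = k.2)).
Proof.
case: p => a b; case: k => c d; case: q => e f.
rewrite /aligned /hseg /vseg /hI /vI /= => al1 al2 pp1 pp2.
case: (b =P d) => E1; case: (a =P c) => E2; case: (d =P f) => E3; case: (c =P e) => E4;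
  rewrite /=; (split; [move=> x y; lia|split; [move=> x y; lia|split; [lia|split; [case=> *; lia|lia]]]]).
Qed.

Definition step (p : point) (m : bool) : point := if m then (p.1.+1, p.2) else (p.1, p.2.+1).
Fixpoint walk (p : point) (ms : seq bool) : seq point :=
  p :: match ms with [::] => [::] | m :: ms' => walk (step p m) ms' end.
Fixpoint dedges (p : point) (ms : seq bool) : seq (point * bool) :=
  match ms with [::] => [::] | m :: ms' => (p, m) :: dedges (step p m) ms' end.
Fixpoint changes (ms : seq bool) : nat :=
  match ms with m :: ((m' :: _) as t) => (m != m') + changes t | _ => 0 end.

Lemma walk_cons p m ms : walk p (m :: ms) = p :: walk (step p m) ms. Proof. by []. Qed.

Lemma walk_ge p ms z : z \in walk p ms -> p.1 <= z.1 /\ p.2 <= z.2.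
Proof.
elim: ms p => [|m ms IH] p; first by rewrite /= inE => /eqP ->.
rewrite walk_cons inE => /orP [/eqP -> //|/IH].
case: m; case: p => a b /=; lia.
Qed.

Lemma walk_hd q ms : walk q ms = q :: behead (walk q ms). Proof. by case: ms. Qed.

Lemma horiz_step q m : horiz q (step q m) = m.
Proof. case: m; rewrite /horiz /step /= ?eqxx //; lia. Qed.

Lemma walk_path p ms : path grid_adj p (behead (walk p ms)).
Proof.
elim: ms p => [|m ms IH] p //=.
rewrite [walk (step p m) ms]walk_hd /= IH andbT.
apply/adjP; case: m; case: p => a b /=; lia.
Qed.

Lemma walk_gp p ms : grid_path (walk p ms).
Proof.
rewrite /grid_path; apply/andP; split.
- by rewrite walk_hd; apply: walk_path.
- elim: ms p => [|m ms IH] p //=.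
  rewrite IH andbT; apply/negP => /walk_ge.
  case: m; case: p => a b /=; lia.
Qed.

Lemma walk_mpath p ms : path (fun a b : point => (b == (a.1.+1, a.2)) || (b == (a.1, a.2.+1)))
  p (behead (walk p ms)).
Proof.
elim: ms p => [|m ms IH] p //=.
rewrite [walk (step p m) ms]walk_hd /= IH andbT.
by case: m; rewrite /step eqxx ?orbT.
Qed.

Lemma walk_mono p ms : monotonic (walk p ms).
Proof. by rewrite /monotonic walk_hd; apply: walk_mpath. Qed.

Lemma walk_bends p ms : bends (walk p ms) = changes ms.
Proof.
elim: ms p => [|m ms IH] p //.
case: ms IH => [|m' ms] IH //.
have := IH (step p m); rewrite !walk_cons [walk _ ms]walk_hd /= => ->.
by rewrite !horiz_step.
Qed.

Lemma pe_cons (a b : point) l : path_edges (a :: b :: l) = (a, b) :: path_edges (b :: l).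
Proof. by []. Qed.

Lemma walk_edges p ms : path_edges (walk p ms) = map (fun e => (e.1, step e.1 e.2)) (dedges p ms).
Proof.
elim: ms p => [|m ms IH] p //.
rewrite walk_cons; have := IH (step p m).
case E : (walk (step p m) ms) => [|q r]; first by move: E; rewrite walk_hd.
have Eq : q = step p m by move: E; rewrite walk_hd => -[].
by rewrite pe_cons /= => ->; rewrite Eq.
Qed.

Lemma same_step u m v m' : same_edge (u, step u m) (v, step v m') = ((u, m) == (v, m')).
Proof.
case: u => a b; case: v => c d; case: m; case: m'; rewrite /same_edge /step /= !xpair_eqE /=; lia.
Qed.

Lemma share_walk p ms p' ms' : share_edge (walk p ms) (walk p' ms') <->
  exists u m, (u, m) \in dedges p ms /\ (u, m) \in dedges p' ms'.
Proof.
rewrite /share_edge !walk_edges; split.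
- case/hasP => e /mapP [[u m] H1 ->] /hasP [f /mapP [[v m'] H2 ->]].
  rewrite /= same_step => /eqP [e1 e2]; exists u, m; split => //.
  by rewrite e1 e2.
- case=> u [m [H1 H2]]; apply/hasP; exists (u, step u m); first by apply/mapP; exists (u, m).
  apply/hasP; exists (u, step u m); first by apply/mapP; exists (u, m).
  by rewrite /= same_step eqxx.
Qed.

Definition stepn (p : point) (m : bool) (t : nat) : point :=
  if m then (p.1 + t, p.2) else (p.1, p.2 + t).
Definition seg_of (p : point) (m : bool) (a : nat) (u : point) : Prop :=
  if m then u.2 = p.2 /\ p.1 <= u.1 < p.1 + a else u.1 = p.1 /\ p.2 <= u.2 < p.2 + a.

Lemma in_dedges_seg p a m ms u m' :
  (u, m') \in dedges p (nseq a m ++ ms) <->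
  (m' = m /\ seg_of p m a u) \/ (u, m') \in dedges (stepn p m a) ms.
Proof.
elim: a p => [|a IH] p.
- have -> : stepn p m 0 = p by case: (m); case: p => x y; rewrite /stepn /= addn0.
  rewrite /seg_of; split; [by right|case=> [[_ h]|h] //; exfalso; move: h; case: (m); lia].
- rewrite /= inE.
  have -> : stepn p m a.+1 = stepn (step p m) m a.
    by case: (m); case: p => x y; rewrite /stepn /step /=; congr pair; lia.
  split.
  + case/orP => [/eqP [-> ->]|/(proj1 (IH (step p m))) [[e1 e2]|h]]; [left|left|by right].
    * split => //; case: (m); case: p => x y; rewrite /seg_of /=; lia.
    * split => //; move: e2; case: (m); case: p => x y; rewrite /seg_of /step /=; lia.
  + case=> [[e h]|h]; last by apply/orP; right; apply/(proj2 (IH (step p m))); right.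
    subst m'; case E : (u == p).
    * by move/eqP: E => ->; rewrite eqxx.
    * apply/orP; right; apply/(proj2 (IH (step p m))); left; split => //.
      move: h E; case: (m); case: (p) => x y; case: (u) => c d; rewrite /seg_of /step /= xpair_eqE; lia.
Qed.

Lemma changes_nseq a m s :
  changes (nseq a.+1 m ++ s) = (if s is m' :: _ then (m != m') : nat else 0) + changes s.
Proof.
elim: a => [|a IH]; first by case: s.
transitivity ((m != m) + changes (nseq a.+1 m ++ s)); first by [].
by rewrite eqxx IH.
Qed.

Lemma changes_nseq' a m s : 0 < a ->
  changes (nseq a m ++ s) = (if s is m' :: _ then (m != m') : nat else 0) + changes s.
Proof. by case: a => // a _; apply: changes_nseq. Qed.

Definition xms n := nseq n.+1 false ++ (nseq n true ++ (nseq 1 false ++ [::])).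
Definition yms n k j := nseq 1 false ++ (nseq (n + k - j) true ++ (nseq (n.+1 - k) false ++ [::])).

Lemma in_x n i u m : (u, m) \in dedges (i, 0) (xms n) <->
  (m = false /\ u.1 = i /\ u.2 < n.+1) \/ (m = true /\ u.2 = n.+1 /\ i <= u.1 < i + n) \/
  (m = false /\ u.1 = i + n /\ u.2 = n.+1).
Proof.
rewrite /xms !in_dedges_seg /stepn /seg_of /= in_nil.
case: u => a b /=; case: m; split; lia.
Qed.

Lemma in_y n k j u m : j <= k.+1 -> k < n ->
  (u, m) \in dedges (j, k) (yms n k j) <->
  (m = false /\ u.1 = j /\ u.2 = k) \/ (m = true /\ u.2 = k.+1 /\ j <= u.1 < n + k) \/
  (m = false /\ u.1 = n + k /\ k.+1 <= u.2 < n.+2).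
Proof.
move=> jk kn.
rewrite /yms !in_dedges_seg /stepn /seg_of /= in_nil.
case: u => a b /=; case: m; split; lia.
Qed.

Lemma changes_x n : 0 < n -> changes (xms n) = 2.
Proof.
move=> n0; rewrite /xms changes_nseq' // changes_nseq' // changes_nseq' //=.
by case: n n0.
Qed.

Lemma changes_y n k j : j <= k.+1 -> k < n -> 1 < n -> changes (yms n k j) = 2.
Proof.
move=> jk kn n1.
have [a' Ea] : exists a', n + k - j = a'.+1 by exists (n + k - j).-1; lia.
have [b' Eb] : exists b', n.+1 - k = b'.+1 by exists (n.+1 - k).-1; lia.
by rewrite /yms Ea Eb !changes_nseq /=.
Qed.

Lemma modS n (k : 'I_n) : (k.+1 = n /\ k.+1 %% n = 0) \/ (k.+1 < n /\ k.+1 %% n = k.+1).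
Proof.
have kn := ltn_ord k.
case: (k.+1 =P n) => [e|ne]; first by left; rewrite e modnn.
right; split; first lia.
rewrite modn_small //; lia.
Qed.

Definition Pn n (v : 'I_n + 'I_n) : seq point :=
  match v with
  | inl i => walk (nat_of_ord i, 0) (xms n)
  | inr k => walk (k.+1 %% n, nat_of_ord k) (yms n k (k.+1 %% n))
  end.

Theorem B2m n : 2 < n -> in_Bm 2 (sun_adj n).
Proof.
move=> n3; exists (Pn (n:=n)); split; last first.
  case=> [i|k]; rewrite /Pn walk_bends; split; try apply: walk_mono.
  - by rewrite changes_x //; lia.
  - have := modS k; have := ltn_ord k => kn hj.
    by rewrite changes_y //; lia.
split; first by case=> [i|k]; apply: walk_gp.
move=> [i|k] [i'|k'] uv.
- have ii : i != i' by apply: contra uv => /eqP ->.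
  have S : share_edge (Pn (inl i)) (Pn (inl i')).
    apply/share_walk; exists (n.-1, n.+1), true.
    have := ltn_ord i; have := ltn_ord i' => h1 h2.
    by split; apply/in_x; right; left; split => //=; lia.
  by rewrite S /=.
- move: k' uv => k uv.
  have := modS k; have := ltn_ord k; have := ltn_ord i => hi hk hj.
  have jk : k.+1 %% n <= k.+1 by lia.
  apply/idP/idP.
  + case/orP => /eqP /= e;
      apply/(share_walk (nat_of_ord i, 0) (xms n) (k.+1 %% n, nat_of_ord k) (yms n k (k.+1 %% n))).
    * exists (n + k, n.+1), false; split; [apply/in_x|apply/in_y] => //=; lia.
    * exists (k.+1 %% n, nat_of_ord k), false; split; [apply/in_x|apply/in_y] => //=; lia.
  + move/(share_walk (nat_of_ord i, 0) (xms n) (k.+1 %% n, nat_of_ord k) (yms n k (k.+1 %% n))).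
    move=> [u [m [H1 H2]]].
    move: H1 H2; rewrite in_x in_y //; case: u => a b /=; lia.
- have := modS k; have := ltn_ord k; have := ltn_ord i' => hi hk hj.
  have jk : k.+1 %% n <= k.+1 by lia.
  apply/idP/idP.
  + case/orP => /eqP /= e;
      apply/(share_walk (k.+1 %% n, nat_of_ord k) (yms n k (k.+1 %% n)) (nat_of_ord i', 0) (xms n)).
    * exists (n + k, n.+1), false; split; [apply/in_y|apply/in_x] => //=; lia.
    * exists (k.+1 %% n, nat_of_ord k), false; split; [apply/in_y|apply/in_x] => //=; lia.
  + move/(share_walk (k.+1 %% n, nat_of_ord k) (yms n k (k.+1 %% n)) (nat_of_ord i', 0) (xms n)).
    move=> [u [m [H1 H2]]].
    move: H1 H2; rewrite in_x in_y //; case: u => a b /=; lia.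
- have kk : nat_of_ord k != nat_of_ord k'.
    by apply: contra uv => /eqP e; apply/eqP; congr inr; apply: val_inj.
  have := modS k; have := ltn_ord k; have := modS k'; have := ltn_ord k' => h1 h2 h3 h4.
  have S : ~~ share_edge (Pn (inr k)) (Pn (inr k')).
    apply/negP.
    move/(share_walk (k.+1 %% n, nat_of_ord k) (yms n k (k.+1 %% n))
                     (k'.+1 %% n, nat_of_ord k') (yms n k' (k'.+1 %% n))).
    move=> [u [m [H1 H2]]].
    rewrite in_y in H1; [|lia|lia]. rewrite in_y in H2; [|lia|lia].
    case: u H1 H2 => a b /= H1 H2; lia.
  by rewrite (negbTE S).
Qed.

Definition x3 : seq (seq point) :=
  [:: [:: (0,1); (1,1); (2,1); (3,1); (3,2); (3,3); (3,4)];
      [:: (6,1); (5,1); (4,1); (3,1); (3,2); (3,3); (3,4)];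
      [:: (0,1); (1,1); (2,1); (3,1); (4,1); (5,1); (6,1)]].
Definition y3 : seq (seq point) :=
  [:: [:: (3,3); (3,4)]; [:: (5,1); (6,1)]; [:: (0,1); (1,1)]].

Definition P3 (v : 'I_3 + 'I_3) : seq point :=
  match v with inl i => nth [::] x3 i | inr k => nth [::] y3 k end.

Theorem B1_3 : in_B 1 (sun_adj 3).
Proof.
exists P3; split; [split|].
- by case=> [[[|[|[|i]]] Hi]|[[|[|[|i]]] Hi]] //; vm_compute.
- move=> [[[|[|[|i]]] Hi]|[[|[|[|i]]] Hi]] [[[|[|[|j]]] Hj]|[[|[|[|j]]] Hj]] //;
  vm_compute => uv //.
- by case=> [[[|[|[|i]]] Hi]|[[|[|[|i]]] Hi]] //; vm_compute.
Qed.

Local Open Scope Z_scope.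

Record prm := Prm { pr : Z; pa : Z; pb : Z; pc : Z; pd : Z; pe : Z }.

Definition Hsh (p q : prm) : Prop :=
  pr p = pr q /\ pa p < pb q /\ pa q < pb p /\ pa p < pb p /\ pa q < pb q.
Definition Vsh (p q : prm) : Prop :=
  pc p = pc q /\ pd p < pe q /\ pd q < pe p /\ pd p < pe p /\ pd q < pe q.
Definition sh p q := Hsh p q \/ Vsh p q.
Definition corner p := pa p < pb p -> pd p < pe p ->
  (pc p = pa p \/ pc p = pb p) /\ (pr p = pd p \/ pr p = pe p).
Definition mono p := pa p < pb p -> pd p < pe p ->
  (pc p = pb p /\ pd p = pr p) \/ (pc p = pa p /\ pe p = pr p).

Definition reflX p := Prm (pr p) (- pb p) (- pa p) (- pc p) (pd p) (pe p).
Definition reflY p := Prm (- pr p) (pa p) (pb p) (pc p) (- pe p) (- pd p).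
Definition tr p := Prm (pc p) (pd p) (pe p) (pr p) (pa p) (pb p).

Ltac unf := unfold sh, Hsh, Vsh, corner, mono, reflX, reflY, tr in *; simpl in *.

Lemma sh_reflX p q : sh (reflX p) (reflX q) <-> sh p q. Proof. unf; lia. Qed.
Lemma sh_reflY p q : sh (reflY p) (reflY q) <-> sh p q. Proof. unf; lia. Qed.
Lemma sh_tr p q : sh (tr p) (tr q) <-> sh p q. Proof. unf; lia. Qed.
Lemma corner_reflX p : corner p -> corner (reflX p). Proof. unf; lia. Qed.
Lemma corner_reflY p : corner p -> corner (reflY p). Proof. unf; lia. Qed.
Lemma corner_tr p : corner p -> corner (tr p). Proof. unf; lia. Qed.
Lemma mono_tr p : mono p -> mono (tr p). Proof. unf; lia. Qed.

Section Gen.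
Variable I : Type.
Definition inpair (s : I -> I) k i := i = k \/ i = s k.

Definition Sun (s : I -> I) (X Y : I -> prm) : Prop :=
  (forall i j, i <> j -> sh (X i) (X j)) /\
  (forall k i, sh (Y k) (X i) <-> inpair s k i) /\
  (forall k l, k <> l -> ~ sh (Y k) (Y l)) /\
  (forall i, corner (X i)) /\ (forall k, corner (Y k)).

Definition SigOK (s : I -> I) :=
  injective s /\ (forall k, s k <> k) /\ (forall k, s (s k) <> k).

Lemma Sun_map s X Y (f : prm -> prm) :
  (forall p q, sh (f p) (f q) <-> sh p q) -> (forall p, corner p -> corner (f p)) ->
  Sun s X Y -> Sun s (fun i => f (X i)) (fun k => f (Y k)).
Proof.
move=> Hf Hc [H1 [H2 [H3 [H4 H5]]]]; split; [|split; [|split; [|split]]].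
- by move=> i j ij; apply Hf; apply H1.
- by move=> k i; rewrite Hf; apply H2.
- by move=> k l kl; rewrite Hf; apply: H3.
- by move=> i; apply: Hc.
- by move=> i; apply: Hc.
Qed.

Lemma pair_diff s (Hs : SigOK s) k k' : k <> k' ->
  exists j, inpair s k j /\ ~ inpair s k' j.
Proof.
case: Hs => [inj [s1 s2]] kk'.
case: (classic (k = s k')) => e.
- exists (s k); split; first by right.
  case=> e2.
  + by apply: (s2 k'); rewrite -e e2.
  + by apply: kk'; apply: inj.
- exists k; split; first by left.
  by case.
Qed.

Lemma third s (Hs : SigOK s) k : ~ inpair s k (s (s k)).
Proof.
case: Hs => [inj [s1 s2]]; case=> e.
- exact: (s2 k e).
- by apply: (s1 k); apply: inj.
Qed.

End Gen.

Section Comb.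
Variable I : Type.

Definition RowH (X : I -> prm) r := forall i, pa (X i) < pb (X i) /\ pr (X i) = r.
Definition QH (X : I -> prm) ql qr :=
  ql <= qr <= ql + 1 /\ forall i, pa (X i) <= ql /\ qr <= pb (X i).
Definition C5 (X : I -> prm) r ql qr := ql = qr -> forall i j,
  pd (X i) < pe (X i) -> pd (X j) < pe (X j) -> pc (X i) = ql -> pc (X j) = ql ->
  (pd (X i) = r <-> pd (X j) = r).

Lemma L2core s X Y r ql qr (HS : Sun s X Y) (Hs : SigOK s) (HR : RowH X r)
  (HQ : QH X ql qr) k k' : k <> k' ->
  pa (Y k) < pb (Y k) -> pr (Y k) = r -> pa (Y k') < pb (Y k') -> pr (Y k') = r ->
  pb (Y k') <= ql -> pb (Y k) <= pa (Y k') -> False.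
Proof.
move=> kk' h1 h2 h3 h4 h5 h6.
case: HS => [H1 [H2 [H3 [H4 H5]]]].
case: (pair_diff Hs kk') => j [Hj Hnj].
have := proj2 (H2 k j) Hj; case: (HR j) => hj1 hj2; case: HQ => q1 /(_ j) q2.
case=> T.
- apply: Hnj; apply/(proj1 (H2 k' j)); left; unf; lia.
- have hv : pd (Y k) < pe (Y k) by unf; lia.
  have hvj : pd (X j) < pe (X j) by unf; lia.
  have := H5 k h1 hv; have := H4 j hj1 hvj.
  move=> cj ck.
  apply: Hnj; apply/(proj1 (H2 k' j)); left; unf; lia.
Qed.

Definition leftY (Y : I -> prm) r ql k := pa (Y k) < pb (Y k) /\ pr (Y k) = r /\ pb (Y k) <= ql.
Definition rightY (Y : I -> prm) r qr k := pa (Y k) < pb (Y k) /\ pr (Y k) = r /\ qr <= pa (Y k).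

Lemma L2 s X Y r ql qr (HS : Sun s X Y) (Hs : SigOK s) (HR : RowH X r)
  (HQ : QH X ql qr) k k' : leftY Y r ql k -> leftY Y r ql k' -> k = k'.
Proof.
move=> [a1 [a2 a3]] [b1 [b2 b3]].
case: (classic (k = k')) => // kk'.
have := HS; case=> [H1 [H2 [H3 [H4 H5]]]].
have nsh := H3 k k' kk'.
have : pb (Y k) <= pa (Y k') \/ pb (Y k') <= pa (Y k).
  apply: NNPP => C; apply: nsh; left; unf; lia.
case=> o.
- by case: (L2core HS Hs HR HQ kk' a1 a2 b1 b2 b3 o).
- have k'k : k' <> k by move=> e; apply: kk'.
  by case: (L2core HS Hs HR HQ k'k b1 b2 a1 a2 a3 o).
Qed.

Lemma RowH_reflX X r : RowH X r -> RowH (fun i => reflX (X i)) r.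
Proof. move=> H i; case: (H i) => *; unf; lia. Qed.
Lemma QH_reflX X ql qr : QH X ql qr -> QH (fun i => reflX (X i)) (- qr) (- ql).
Proof. move=> [h1 h2]; split; first lia. move=> i; case: (h2 i) => *; unf; lia. Qed.

Lemma L2R s X Y r ql qr (HS : Sun s X Y) (Hs : SigOK s) (HR : RowH X r)
  (HQ : QH X ql qr) k k' : rightY Y r qr k -> rightY Y r qr k' -> k = k'.
Proof.
move=> h1 h2.
have HS' := Sun_map sh_reflX corner_reflX HS.
apply: (L2 HS' Hs (RowH_reflX HR) (QH_reflX HQ)).
- move: h1; rewrite /rightY /leftY; unf; lia.
- move: h2; rewrite /rightY /leftY; unf; lia.
Qed.

Lemma L1 s X Y r ql qr (HS : Sun s X Y) (Hs : SigOK s) (HR : RowH X r)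
  (HQ : QH X ql qr) k i : Hsh (Y k) (X i) -> leftY Y r ql k \/ rightY Y r qr k.
Proof.
move=> h.
have := HS; case=> [H1 [H2 [H3 [H4 H5]]]].
case: (HR i) => hi1 hi2.
apply: NNPP => C.
apply: (third Hs (k := k)); apply/(proj1 (H2 k _)); left.
case: (HR (s (s k))) => hj1 hj2; case: (HQ) => q1 /(_ (s (s k))) q2.
case: (HQ) => _ /(_ i) q3.
move: C; rewrite /leftY /rightY; unf; lia.
Qed.

Lemma L3core s X Y r (HS : Sun s X Y) (Hs : SigOK s) (HR : RowH X r) k k' i :
  Vsh (Y k) (X i) -> Vsh (Y k') (X i) -> k <> k' -> pd (X i) = r ->
  pe (Y k) <= pd (Y k') -> False.
Proof.
move=> v1 v2 kk' hd ho.
have := HS; case=> [H1 [H2 [H3 [H4 H5]]]].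
have k'k : k' <> k by move=> e; apply: kk'.
case: (pair_diff Hs k'k) => j [Hj Hnj].
have := proj2 (H2 k' j) Hj; case: (HR j) => hj1 hj2.
case=> T.
-
  have hv : pd (Y k') < pe (Y k') by unf; lia.
  have ha : pa (Y k') < pb (Y k') by unf; lia.
  have := H5 k' ha hv => ck.
  exfalso; unf; lia.
- have hvj : pd (X j) < pe (X j) by unf; lia.
  have := H4 j hj1 hvj => cj.
  apply: Hnj; apply/(proj1 (H2 k j)); right; unf; lia.
Qed.

Lemma RowH_reflY X r : RowH X r -> RowH (fun i => reflY (X i)) (- r).
Proof. move=> H i; case: (H i) => *; unf; lia. Qed.

Lemma L3 s X Y r (HS : Sun s X Y) (Hs : SigOK s) (HR : RowH X r) k k' i :
  Vsh (Y k) (X i) -> Vsh (Y k') (X i) -> k = k'.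
Proof.
move=> v1 v2.
case: (classic (k = k')) => // kk'.
have := HS; case=> [H1 [H2 [H3 [H4 H5]]]].
have k'k : k' <> k by move=> e; apply: kk'.
case: (HR i) => hi1 hi2.
have hv : pd (X i) < pe (X i) by unf; lia.
have := H4 i hi1 hv => ci.
have nv : ~ Vsh (Y k) (Y k') by move=> C; apply: (H3 k k' kk'); right.
have o : pe (Y k) <= pd (Y k') \/ pe (Y k') <= pd (Y k).
  apply: NNPP => C; apply: nv; unf; lia.
have [up|dn] : pd (X i) = r \/ pe (X i) = r by lia.
- case: o => o.
  + by case: (L3core HS Hs HR v1 v2 kk' up o).
  + by case: (L3core HS Hs HR v2 v1 k'k up o).
- have HS' := Sun_map sh_reflY corner_reflY HS.
  have HR' := RowH_reflY HR.
  have w1 : Vsh (reflY (Y k)) (reflY (X i)) by move: v1; unf; lia.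
  have w2 : Vsh (reflY (Y k')) (reflY (X i)) by move: v2; unf; lia.
  have up' : pd (reflY (X i)) = - r by unf; lia.
  case: o => o.
  + have o' : pe (reflY (Y k')) <= pd (reflY (Y k)) by unf; lia.
    by case: (L3core HS' Hs HR' w2 w1 k'k up' o').
  + have o' : pe (reflY (Y k)) <= pd (reflY (Y k')) by unf; lia.
    by case: (L3core HS' Hs HR' w1 w2 kk' up' o').
Qed.

End Comb.

Section Comb2.
Variable I : Type.

Definition Nk (X Y : I -> prm) k := exists i, Hsh (Y k) (X i).

Lemma sh_notH p q : sh p q -> ~ Hsh p q -> Vsh p q.
Proof. by case. Qed.

Lemma L4 s X Y r (HS : Sun s X Y) (Hs : SigOK s) (HR : RowH X r) k :
  Nk X Y k \/ Nk X Y (s k).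
Proof.
apply: NNPP => C.
have := HS; case=> [H1 [H2 [H3 [H4 H5]]]].
have n1 : ~ Nk X Y k by move=> h; apply: C; left.
have n2 : ~ Nk X Y (s k) by move=> h; apply: C; right.
have v1 : Vsh (Y k) (X (s k)).
  apply: sh_notH; first by apply/(proj2 (H2 _ _)); right.
  by move=> h; apply: n1; exists (s k).
have v2 : Vsh (Y (s k)) (X (s k)).
  apply: sh_notH; first by apply/(proj2 (H2 _ _)); left.
  by move=> h; apply: n2; exists (s k).
case: (Hs) => _ [s1 _].
by apply: (s1 k); symmetry; exact: (L3 HS Hs HR v1 v2).
Qed.

Lemma Nside s X Y r ql qr (HS : Sun s X Y) (Hs : SigOK s) (HR : RowH X r)
  (HQ : QH X ql qr) k : Nk X Y k -> leftY Y r ql k \/ rightY Y r qr k.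
Proof. by case=> i h; apply: (L1 HS Hs HR HQ h). Qed.

Lemma N3 s X Y r ql qr (HS : Sun s X Y) (Hs : SigOK s) (HR : RowH X r)
  (HQ : QH X ql qr) k1 k2 k3 : Nk X Y k1 -> Nk X Y k2 -> Nk X Y k3 ->
  k1 = k2 \/ k1 = k3 \/ k2 = k3.
Proof.
move=> /(Nside HS Hs HR HQ) [a|a] /(Nside HS Hs HR HQ) [b|b]
        /(Nside HS Hs HR HQ) [c|c].
all: try (left; apply: (L2 HS Hs HR HQ); assumption).
all: try (left; apply: (L2R HS Hs HR HQ); assumption).
all: try (right; left; apply: (L2 HS Hs HR HQ); assumption).
all: try (right; left; apply: (L2R HS Hs HR HQ); assumption).
all: try (right; right; apply: (L2 HS Hs HR HQ); assumption).
all: try (right; right; apply: (L2R HS Hs HR HQ); assumption).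
Qed.

Lemma Vnest_up Y Y' X1 X2 r : Vsh Y X1 -> Vsh Y' X2 -> pc X1 = pc X2 ->
  pd X1 = r -> pd X2 = r -> pe Y <= pd Y' -> Vsh Y X2.
Proof. unf; lia. Qed.
Lemma Vnest_dn Y Y' X1 X2 r : Vsh Y X1 -> Vsh Y' X2 -> pc X1 = pc X2 ->
  pe X1 = r -> pe X2 = r -> pe Y' <= pd Y -> Vsh Y X2.
Proof. unf; lia. Qed.

Lemma Fin4 s X Y r ql qr (HS : Sun s X Y) (Hs : SigOK s) (HR : RowH X r)
  (HQ : QH X ql qr) (HC : C5 X r ql qr) (H3d : forall k, s (s (s k)) <> k) k :
  ~ Nk X Y (s k) -> ~ Nk X Y (s (s (s k))) -> s (s (s (s k))) = k ->
  leftY Y r ql k -> rightY Y r qr (s (s k)) -> False.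
Proof.
have := Hs; case=> sinj [s1 s2].
move Ek1: (s k) => k1; move Ek2: (s k1) => k2; move Ek3: (s k2) => k3.
move=> nN1 nN3 ek [l1 [l2 l3]] [r1 [r2 r3]].
have := HS; case=> [H1 [H2 [H3 [H4 H5]]]].
have d01 : k <> k1 by move=> e; apply: (s1 k); rewrite Ek1 -e.
have d02 : k <> k2 by move=> e; apply: (s2 k); rewrite Ek1 Ek2 -e.
have d03 : k <> k3 by move=> e; apply: (H3d k); rewrite Ek1 Ek2 Ek3 -e.
have d12 : k1 <> k2 by move=> e; apply: (s1 k1); rewrite Ek2 -e.
have d13 : k1 <> k3 by move=> e; apply: (s2 k1); rewrite Ek2 Ek3 -e.
have d23 : k2 <> k3 by move=> e; apply: (s1 k2); rewrite Ek3 -e.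
have pin k' i : inpair s k' i -> sh (Y k') (X i) by move=> h; apply/(proj2 (H2 _ _)).
have pout k' i : sh (Y k') (X i) -> i = k' \/ i = s k' by move=> h; apply/(proj1 (H2 _ _)).
have V11 : Vsh (Y k1) (X k1).
  apply: sh_notH; first by apply: pin; left.
  by move=> h; apply: nN1; exists k1.
have V12 : Vsh (Y k1) (X k2).
  apply: sh_notH; first by apply: pin; right; rewrite Ek2.
  by move=> h; apply: nN1; exists k2.
have V33 : Vsh (Y k3) (X k3).
  apply: sh_notH; first by apply: pin; left.
  by move=> h; apply: nN3; exists k3.
have V30 : Vsh (Y k3) (X k).
  apply: sh_notH; first by apply: pin; right; rewrite ek.
  by move=> h; apply: nN3; exists k.
have Hk0 : Hsh (Y k) (X k).
  case: (pin k k (or_introl erefl)) => // h.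
  by case: d03; apply: (L3 HS Hs HR h V30).
have Hk1 : Hsh (Y k) (X k1).
  case: (pin k k1 (or_intror (esym Ek1))) => // h.
  by case: d01; apply: (L3 HS Hs HR h V11).
have Hk22 : Hsh (Y k2) (X k2).
  case: (pin k2 k2 (or_introl erefl)) => // h.
  by case: d12; symmetry; apply: (L3 HS Hs HR h V12).
have Hk23 : Hsh (Y k2) (X k3).
  case: (pin k2 k3 (or_intror (esym Ek3))) => // h.
  by case: d23; apply: (L3 HS Hs HR h V33).
have n02 : ~ sh (Y k) (X k2) by move=> /pout; rewrite Ek1 => -[e|e]; [apply: d02 | apply: d12]; rewrite e.
have n03 : ~ sh (Y k) (X k3) by move=> /pout; rewrite Ek1 => -[e|e]; [apply: d03 | apply: d13]; rewrite e.
have n20 : ~ sh (Y k2) (X k) by move=> /pout; rewrite Ek3 => -[e|e]; [apply: d02 | apply: d03]; rewrite e.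
have n21 : ~ sh (Y k2) (X k1) by move=> /pout; rewrite Ek3 => -[e|e]; [apply: d12 | apply: d13]; rewrite e.
have := HR k; have := HR k1; have := HR k2; have := HR k3.
case: (HQ) => q0 /[dup] Q /(_ k) q1; move: (Q k1) (Q k2) (Q k3) => q2 q3 q4.
move=> [x3a x3b] [x2a x2b] [x1a x1b] [x0a x0b].
have A1 : pa (X k1) < pb (Y k) by clear -Hk1; unf; lia.
have A1' : pa (X k) < pb (Y k) by clear -Hk0; unf; lia.
have A2 : pb (Y k) <= pa (X k2).
  clear -n02 x2a x2b q3 l1 l2 l3 q0; apply: NNPP => C; apply: n02; left; unf; lia.
have A2' : pb (Y k) <= pa (X k3).
  clear -n03 x3a x3b q4 l1 l2 l3 q0; apply: NNPP => C; apply: n03; left; unf; lia.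
have B1 : pa (Y k2) < pb (X k2) by clear -Hk22; unf; lia.
have B1' : pa (Y k2) < pb (X k3) by clear -Hk23; unf; lia.
have B2 : pb (X k1) <= pa (Y k2).
  clear -n21 x1a x1b q2 r1 r2 r3 q0; apply: NNPP => C; apply: n21; left; unf; lia.
have B2' : pb (X k) <= pa (Y k2).
  clear -n20 x0a x0b q1 r1 r2 r3 q0; apply: NNPP => C; apply: n20; left; unf; lia.
have c1 := proj1 (H4 k1 x1a (proj2 (proj2 (proj2 (proj2 V11))))).
have c2 := proj1 (H4 k2 x2a (proj2 (proj2 (proj2 (proj2 V12))))).
have c3 := proj1 (H4 k3 x3a (proj2 (proj2 (proj2 (proj2 V33))))).
have c0 := proj1 (H4 k x0a (proj2 (proj2 (proj2 (proj2 V30))))).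
have e12 : pc (X k1) = pc (X k2) by clear -V11 V12; unf; lia.
have e30 : pc (X k3) = pc (X k) by clear -V33 V30; unf; lia.
have [eqq [pk1 pk0]] : ql = qr /\ pc (X k1) = ql /\ pc (X k) = ql.
  clear -c0 c1 c2 c3 e12 e30 A1 A1' A2 A2' B1 B1' B2 B2' q0 q1 q2 q3 q4 x0a x1a x2a x3a l1 l3 r1 r3.
  lia.
have vk1 : pd (X k1) < pe (X k1) by clear -V11; unf; lia.
have vk0 : pd (X k) < pe (X k) by clear -V30; unf; lia.
have dir := HC eqq k1 k vk1 vk0 pk1 pk0.
have nyy : ~ Vsh (Y k1) (Y k3) by move=> C; apply: (H3 k1 k3 d13); right.
have o : pe (Y k1) <= pd (Y k3) \/ pe (Y k3) <= pd (Y k1).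
  clear -nyy V11 V33 V30 V12 pk1 pk0.
  apply: NNPP => C; apply: nyy; unf; lia.
have n10 : ~ sh (Y k1) (X k) by move=> /pout; rewrite Ek2 => -[e|e]; [apply: d01 | apply: d02]; rewrite e.
have n31 : ~ sh (Y k3) (X k1).
  move=> /pout; rewrite ek => -[e|e]; [apply: d13 | apply: d01]; by rewrite e.
have cr1 := proj2 (H4 k1 x1a vk1).
have [up|dn] : pd (X k1) = r \/ pe (X k1) = r by clear -cr1 x1b; lia.
- have up0 : pd (X k) = r by apply/dir.
  have ec : pc (X k1) = pc (X k) by rewrite pk1 pk0.
  case: o => o.
  + by apply: n10; right; apply: (Vnest_up V11 V30 ec up up0 o).
  + by apply: n31; right; apply: (Vnest_up V30 V11 (esym ec) up0 up o).
- have cr0 := proj2 (H4 k x0a vk0).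
  have dn0 : pe (X k) = r.
    have : pd (X k) <> r by move=> h; move: (proj2 dir h) dn vk1; clear; lia.
    clear -cr0 x0b; lia.
  have ec : pc (X k1) = pc (X k) by rewrite pk1 pk0.
  case: o => o.
  + by apply: n31; right; apply: (Vnest_dn V30 V11 (esym ec) dn0 dn o).
  + by apply: n10; right; apply: (Vnest_dn V11 V30 ec dn dn0 o).
Qed.

End Comb2.

Section Comb3.
Variable I : Type.

Lemma Comb4 (s : I -> I) X Y r ql qr (HS : Sun s X Y) (Hs : SigOK s) (HR : RowH X r)
  (HQ : QH X ql qr) (HC : C5 X r ql qr) (H3d : forall k, s (s (s k)) <> k) (i0 : I) :
  False.
Proof.
have := Hs; case=> sinj [s1 s2].
have N3' := N3 HS Hs HR HQ.
have [m Nm] : exists m, Nk X Y m by case: (L4 HS Hs HR i0) => h; eexists; exact h.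
have d01 : m <> s m := fun e => s1 m (esym e).
have d02 : m <> s (s m) := fun e => s2 m (esym e).
have d03 : m <> s (s (s m)) := fun e => H3d m (esym e).
have d12 : s m <> s (s m) := fun e => s1 (s m) (esym e).
have d13 : s m <> s (s (s m)) := fun e => s2 (s m) (esym e).
have d23 : s (s m) <> s (s (s m)) := fun e => s1 (s (s m)) (esym e).
case: (L4 HS Hs HR (s m)) => N1.
- case: (L4 HS Hs HR (s (s m))) => N2.
  + by case: (N3' _ _ _ Nm N1 N2) => [e|[e|e]].
  + by case: (N3' _ _ _ Nm N1 N2) => [e|[e|e]].
- case: (L4 HS Hs HR (s (s (s m)))) => N3x.
  + by case: (N3' _ _ _ Nm N1 N3x) => [e|[e|e]].
  have e4 : s (s (s (s m))) = m.
    case: (N3' _ _ _ Nm N1 N3x) => [e|[e|e]].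
    * by case: d02.
    * by symmetry.
    * exfalso; apply: d02; apply: (sinj); apply: (sinj); exact e.
  have nN1 : ~ Nk X Y (s m) by move=> h; case: (N3' _ _ _ Nm h N1) => [e|[e|e]].
  have nN3 : ~ Nk X Y (s (s (s m))) by move=> h; case: (N3' _ _ _ Nm N1 h) => [e|[e|e]].
  case: (Nside HS Hs HR HQ Nm) => [lm|rm]; case: (Nside HS Hs HR HQ N1) => [l2|r2].
  + by case: d02; apply: (L2 HS Hs HR HQ lm l2).
  + exact: (Fin4 HS Hs HR HQ HC H3d nN1 nN3 e4 lm r2).
  + apply: (Fin4 HS Hs HR HQ HC H3d (k := s (s m))) => //; rewrite ?e4 //.
  + by case: d02; apply: (L2R HS Hs HR HQ rm r2).
Qed.

Lemma Comb3 (s : I -> I) X Y r ql qr (HS : Sun s X Y) (Hs : SigOK s) (HR : RowH X r)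
  (HQ : QH X ql qr) (HC : C5 X r ql qr) (H3e : forall k, s (s (s k)) = k)
  (HM : forall i, mono (X i)) (i0 : I) : False.
Proof.
have := Hs; case=> sinj [s1 s2].
have := HS; case=> [H1 [H2 [H3 [H4 H5]]]].
have N3' := N3 HS Hs HR HQ.
have [m nm] : exists m, ~ Nk X Y m.
  apply: NNPP => C.
  have a0 : Nk X Y i0 by apply: NNPP => h; apply: C; exists i0.
  have a1 : Nk X Y (s i0) by apply: NNPP => h; apply: C; exists (s i0).
  have a2 : Nk X Y (s (s i0)) by apply: NNPP => h; apply: C; exists (s (s i0)).
  case: (N3' _ _ _ a0 a1 a2) => [e|[e|e]].
  + exact: (s1 i0 (esym e)).
  + exact: (s2 i0 (esym e)).
  + exact: (s1 (s i0) (esym e)).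
have N1 : Nk X Y (s m) by case: (L4 HS Hs HR m).
have N2 : Nk X Y (s (s m)).
  case: (L4 HS Hs HR (s (s m))) => //; by rewrite H3e.
have d01 : m <> s m := fun e => s1 m (esym e).
have d02 : m <> s (s m) := fun e => s2 m (esym e).
have d12 : s m <> s (s m) := fun e => s1 (s m) (esym e).
have pin k' i : inpair s k' i -> sh (Y k') (X i) by move=> h; apply/(proj2 (H2 _ _)).
have pout k' i : sh (Y k') (X i) -> i = k' \/ i = s k' by move=> h; apply/(proj1 (H2 _ _)).
have V00 : Vsh (Y m) (X m).
  apply: sh_notH; first by apply: pin; left.
  by move=> h; apply: nm; exists m.
have V01 : Vsh (Y m) (X (s m)).
  apply: sh_notH; first by apply: pin; right.
  by move=> h; apply: nm; exists (s m).
have H11 : Hsh (Y (s m)) (X (s m)).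
  case: (pin (s m) (s m) (or_introl erefl)) => // h.
  by case: d01; apply: (L3 HS Hs HR V01 h).
have H20 : Hsh (Y (s (s m))) (X m).
  case: (pin (s (s m)) m (or_intror (esym (H3e m)))) => // h.
  by case: d02; apply: (L3 HS Hs HR V00 h).
have n10 : ~ sh (Y (s m)) (X m) by move=> /pout [e|e]; [apply: d01 | apply: d02].
have n21 : ~ sh (Y (s (s m))) (X (s m)).
  by move=> /pout; rewrite H3e => -[e|e]; [apply: d12 | apply: d01].
case: (HR m) => xma xmb; case: (HR (s m)) => x1a x1b.
case: (HQ) => q0 /[dup] Q /(_ m) qm; move: (Q (s m)) => q1.
have vm : pd (X m) < pe (X m) by clear -V00; unf; lia.
have v1 : pd (X (s m)) < pe (X (s m)) by clear -V01; unf; lia.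
have mm := HM m xma vm; have m1 := HM (s m) x1a v1.
have ec : pc (X m) = pc (X (s m)) by clear -V00 V01; unf; lia.
have key : ql = qr /\ pc (X m) = ql /\
    ((pd (X m) = r /\ pe (X (s m)) = r) \/ (pe (X m) = r /\ pd (X (s m)) = r)).
  case: (Nside HS Hs HR HQ N1) => [[l1 [l2 l3]]|[l1 [l2 l3]]];
  case: (Nside HS Hs HR HQ N2) => [[r1 [r2 r3]]|[r1 [r2 r3]]].
  - by case: d12; apply: (L2 HS Hs HR HQ); split.
  - have A1 : pa (X (s m)) < pb (Y (s m)) by clear -H11; unf; lia.
    have A2 : pb (Y (s m)) <= pa (X m).
      clear -n10 xma xmb qm l1 l2 l3 q0; apply: NNPP => C; apply: n10; left; unf; lia.
    have B1 : pa (Y (s (s m))) < pb (X m) by clear -H20; unf; lia.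
    have B2 : pb (X (s m)) <= pa (Y (s (s m))).
      clear -n21 x1a x1b q1 r1 r2 r3 q0; apply: NNPP => C; apply: n21; left; unf; lia.
    clear -A1 A2 B1 B2 mm m1 ec qm q1 q0 xma x1a xmb x1b l3 r3 vm v1; lia.
  - have A1 : pa (Y (s m)) < pb (X (s m)) by clear -H11; unf; lia.
    have A2 : pb (X m) <= pa (Y (s m)).
      clear -n10 xma xmb qm l1 l2 l3 q0; apply: NNPP => C; apply: n10; left; unf; lia.
    have B1 : pa (X m) < pb (Y (s (s m))) by clear -H20; unf; lia.
    have B2 : pb (Y (s (s m))) <= pa (X (s m)).
      clear -n21 x1a x1b q1 r1 r2 r3 q0; apply: NNPP => C; apply: n21; left; unf; lia.
    clear -A1 A2 B1 B2 mm m1 ec qm q1 q0 xma x1a xmb x1b l3 r3 vm v1; lia.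
  - by case: d12; apply: (L2R HS Hs HR HQ); split.
case: key => eqq [pm dd].
have p1 : pc (X (s m)) = ql by rewrite -ec.
have dir := HC eqq m (s m) vm v1 pm p1.
case: dd => [[a b]|[a b]].
- have := proj1 dir a; clear -b v1; lia.
- have := proj2 dir b; clear -a vm; lia.
Qed.

End Comb3.

Lemma ex_max (I : finType) (f : I -> Z) (i0 : I) : exists i, forall j, f j <= f i.
Proof.
have : forall l : seq I, exists i, forall j, j \in l -> f j <= f i.
  elim=> [|x l [i IH]]; first by exists i0.
  case: (Z.le_gt_cases (f x) (f i)) => h.
  - exists i => j; rewrite inE => /orP [/eqP -> // | /IH //].
  - exists x => j; rewrite inE => /orP [/eqP -> | /IH]; lia.
move/(_ (enum I)) => [i H]; exists i => j; apply: H; by rewrite mem_enum.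
Qed.

Section Final.
Variable I : finType.

Definition ColH (X : I -> prm) c := forall i, pd (X i) < pe (X i) /\ pc (X i) = c.

Lemma LemmaT (s : I -> I) X Y (HS : Sun s X Y) (Hs : SigOK s) (i0 : I) :
  (exists r, RowH X r) \/ (exists c, ColH X c).
Proof.
have := HS; case=> [H1 _].
have := Hs; case=> _ [s1 _].
case: (classic (forall i j, i <> j -> Hsh (X i) (X j))) => [AH|].
- left; exists (pr (X i0)) => i.
  case: (classic (i = i0)) => [->|ne].
  + have := AH i0 (s i0) (fun e => s1 i0 (esym e)); unf; lia.
  + have := AH i i0 ne; unf; lia.
- move=> nA.
  have [i [j [ij nH]]] : exists i j, i <> j /\ ~ Hsh (X i) (X j).
    apply: NNPP => C; apply: nA => i j ij; apply: NNPP => h; apply: C; by exists i, j; split.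
  have V : Vsh (X i) (X j) by case: (H1 i j ij).
  case: (classic (forall m, pd (X m) < pe (X m) /\ pc (X m) = pc (X i))) => [AV|].
  + by right; exists (pc (X i)).
  + move=> nA2.
    have [m nm] : exists m, ~ (pd (X m) < pe (X m) /\ pc (X m) = pc (X i)).
      apply: NNPP => C; apply: nA2 => m; apply: NNPP => h; by apply: C; exists m.
    have mi : m <> i by move=> e; apply: nm; rewrite e; move: V; unf; lia.
    have Hmi : Hsh (X m) (X i).
      case: (H1 m i mi) => // T; exfalso; apply: nm; move: T; unf; lia.
    left; exists (pr (X m)) => t.
    case: (classic (t = m)) => [->|tm]; first by move: Hmi; unf; lia.
    case: (classic (pd (X t) < pe (X t) /\ pc (X t) = pc (X i))) => hv.
    * case: (H1 t m tm) => T.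
      -- by move: T; unf; lia.
      -- exfalso; apply: nm; move: T hv; unf; lia.
    * have ti : t <> i by move=> e; apply: hv; rewrite e; move: V; unf; lia.
      case: (H1 t i ti) => T.
      -- by move: T Hmi; unf; lia.
      -- exfalso; apply: hv; move: T; unf; lia.
Qed.

Lemma LemmaQ (s : I -> I) X Y r (HS : Sun s X Y) (Hs : SigOK s) (HR : RowH X r)
  (i0 : I) : exists ql qr, QH X ql qr /\ C5 X r ql qr.
Proof.
have [iM HM] := ex_max (fun i => pa (X i)) i0.
have [im Hm] := ex_max (fun i => - pb (X i)) i0.
simpl in HM, Hm.
have := HS; case=> [H1 [_ [_ [H4 _]]]].
have Mm : pa (X iM) <= pb (X im).
  apply: NNPP => C.
  have ne : iM <> im.
    move=> e; move: C; rewrite e; case: (HR im) => *; lia.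
  case: (H1 _ _ ne) => T.
  - move: T C; unf; lia.
  - case: (HR iM) => a1 _; case: (HR im) => a2 _.
    have v1 : pd (X iM) < pe (X iM) by move: T; unf; lia.
    have v2 : pd (X im) < pe (X im) by move: T; unf; lia.
    have c1 := proj1 (H4 iM a1 v1); have c2 := proj1 (H4 im a2 v2).
    have e : pc (X iM) = pc (X im) by move: T; unf; lia.
    clear -c1 c2 e a1 a2 C; lia.
case: (Z.lt_ge_cases (pa (X iM)) (pb (X im))) => h.
- exists (pa (X iM)), (pa (X iM) + 1); split.
  + split; first lia. move=> i; have := HM i; have := Hm i; lia.
  + move=> e; lia.
- exists (pa (X iM)), (pa (X iM)); split.
  + split; first lia. move=> i; have := HM i; have := Hm i; lia.
  + have helper : forall i j, pd (X i) < pe (X i) -> pd (X j) < pe (X j) ->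
        pc (X i) = pa (X iM) -> pc (X j) = pa (X iM) -> pd (X i) = r -> pe (X j) = r -> False.
      move=> i j vi vj ci cj di ej.
      have ij : i <> j by move=> e; move: vi di ej; rewrite e; lia.
      have Hij : Hsh (X i) (X j).
        case: (H1 i j ij) => // T; move: T; unf; lia.
      case: (HR i) => ai ri; case: (HR j) => aj rj.
      have ki := proj1 (H4 i ai vi); have kj := proj1 (H4 j aj vj).
      have hMi := HM i; have hMj := HM j; have hmi := Hm i; have hmj := Hm j.
      have [[e1 e2]|[e1 e2]] : (pa (X i) = pa (X iM) /\ pa (X j) = pa (X iM)) \/
                               (pb (X i) = pa (X iM) /\ pb (X j) = pa (X iM)).
        by move: Hij; unf; lia.
      *
        have ti : im <> i by move=> e; rewrite e in h Mm; lia.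
        have tj : im <> j by move=> e; rewrite e in h Mm; lia.
        case: (HR im) => at_ rt.
        case: (H1 im i ti) => T1; first by move: T1; unf; lia.
        have vt : pd (X im) < pe (X im) by move: T1; unf; lia.
        have kt := proj2 (H4 im at_ vt).
        have dt : pd (X im) = r by move: T1 kt; unf; lia.
        case: (H1 im j tj) => T2; first by move: T2; unf; lia.
        by move: T2; unf; lia.
      * have ti : iM <> i by move=> e; rewrite e in e1; lia.
        have tj : iM <> j by move=> e; rewrite e in e2; lia.
        case: (HR iM) => at_ rt.
        case: (H1 iM i ti) => T1; first by move: T1; unf; lia.
        have vt : pd (X iM) < pe (X iM) by move: T1; unf; lia.
        have kt := proj2 (H4 iM at_ vt).
        have dt : pd (X iM) = r by move: T1 kt; unf; lia.
        case: (H1 iM j tj) => T2; first by move: T2; unf; lia.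
        by move: T2; unf; lia.
    move=> _ i j vi vj ci cj; split => d.
    * apply: NNPP => C.
      case: (HR j) => aj rj; have kj := proj2 (H4 j aj vj).
      by apply: (helper i j) => //; lia.
    * apply: NNPP => C.
      case: (HR i) => ai ri; have ki := proj2 (H4 i ai vi).
      by apply: (helper j i) => //; lia.
Qed.

Theorem AbsMain (s : I -> I) X Y (i0 : I) : Sun s X Y -> SigOK s ->
  ((forall k, s (s (s k)) <> k) \/ ((forall k, s (s (s k)) = k) /\ forall i, mono (X i))) ->
  False.
Proof.
move=> HS Hs Hcase.
suff row : forall X Y r, Sun s X Y -> RowH X r ->
    ((forall k, s (s (s k)) <> k) \/ ((forall k, s (s (s k)) = k) /\ forall i, mono (X i))) ->
    False.
  case: (LemmaT HS Hs i0) => [[r HR]|[c HC]]; first exact: (row X Y r HS HR Hcase).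
  apply: (row (fun i => tr (X i)) (fun k => tr (Y k)) c).
  - exact: (Sun_map sh_tr corner_tr HS).
  - move=> i; case: (HC i) => *; unf; lia.
  - case: Hcase => [h|[h1 h2]]; [left | right; split] => //.
    by move=> i; apply: mono_tr.
move=> X' Y' r HS' HR' Hc.
have [ql [qr [HQ HC]]] := LemmaQ HS' Hs HR' i0.
case: Hc => [h|[h1 h2]].
- exact: (Comb4 HS' Hs HR' HQ HC h i0).
- exact: (Comb3 HS' Hs HR' HQ HC h1 h2 i0).
Qed.

End Final.

Local Close Scope Z_scope.


Definition mkP (p k q : point) : prm :=
  Prm (Z.of_nat k.2) (Z.of_nat (hI p k q).1) (Z.of_nat (hI p k q).2)
      (Z.of_nat k.1) (Z.of_nat (vI p k q).1) (Z.of_nat (vI p k q).2).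

Definition rep (s : seq point) (P : prm) : Prop :=
  (forall x y, (true, x, y) \in K s <-> (Z.of_nat y = pr P /\ pa P <= Z.of_nat x < pb P)%Z) /\
  (forall x y, (false, x, y) \in K s <-> (Z.of_nat x = pc P /\ pd P <= Z.of_nat y < pe P)%Z) /\
  (0 <= pr P /\ 0 <= pa P /\ 0 <= pc P /\ 0 <= pd P)%Z.

Lemma path_prm s : grid_path s -> bends s <= 1 ->
  exists P, rep s P /\ corner P /\ (bends s = 0 -> mono P) /\ (monotonic s -> mono P).
Proof.
case: s => [|p s] gp hb.
- exists (Prm 0 0 0 0 0 0); rewrite /rep /corner /mono /=.
  split; last by split; lia.
  split; [move=> x y; rewrite in_nil; lia | split; [move=> x y; rewrite in_nil; lia | lia]].
- case: (Lmain gp hb) => k [al1 [al2 [pp1 [pp2 [pts [hk [vk [sec [str mon]]]]]]]]].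
  have [h1 [h2 [h3 [h4 h5]]]] := params_ok al1 al2 pp1 pp2.
  exists (mkP p k (last p s)); rewrite /rep /corner /mono /mkP /=.
  split.
    split. move=> x y; rewrite hk h1; lia.
    split. move=> x y; rewrite vk h2; lia.
    lia.
  split. move=> A B; have := h3 ltac:(lia) ltac:(lia); lia.
  split. move=> /str e A B; have := h4 e; lia.
  move=> /mon [m1 [m2 [m3 m4]]] A B; have := h5 m1 m2 m3 m4 ltac:(lia) ltac:(lia); lia.
Qed.

Lemma share_sh s t P Q : sorted grid_adj s -> sorted grid_adj t -> rep s P -> rep t Q ->
  share_edge s t <-> sh P Q.
Proof.
move=> ss st [hs [vs ns]] [ht [vt nt]]; rewrite share_K //; split.
- case/hasP => [[[b x] y]] in1 in2.
  case: b in1 in2 => in1 in2.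
  + left; move: (proj1 (hs x y) in1) (proj1 (ht x y) in2); rewrite /Hsh; lia.
  + right; move: (proj1 (vs x y) in1) (proj1 (vt x y) in2); rewrite /Vsh; lia.
- case=> [H|H]; apply/hasP.
  + exists (true, Z.to_nat (Z.max (pa P) (pa Q)), Z.to_nat (pr P)).
    * apply/(proj2 (hs _ _)); move: H; rewrite /Hsh; lia.
    * apply/(proj2 (ht _ _)); move: H; rewrite /Hsh; lia.
  + exists (false, Z.to_nat (pc P), Z.to_nat (Z.max (pd P) (pd Q))).
    * apply/(proj2 (vs _ _)); move: H; rewrite /Vsh; lia.
    * apply/(proj2 (vt _ _)); move: H; rewrite /Vsh; lia.
Qed.

Definition sg n (H : 0 < n) (k : 'I_n) : 'I_n := Ordinal (ltn_pmod k.+1 H).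

Lemma sgE n (H : 0 < n) (k : 'I_n) : val (sg H k) = if k.+1 == n then 0 else k.+1.
Proof.
rewrite /sg /=; have kn := ltn_ord k.
case: eqP => [->|ne]; first by rewrite modnn.
rewrite modn_small //; lia.
Qed.

Lemma SigOK_sg n (H : 0 < n) : 2 < n -> SigOK (sg H).
Proof.
move=> n3; split; [|split].
- move=> k l /(congr1 val); rewrite !sgE => e; apply: val_inj => /=.
  have := ltn_ord k; have := ltn_ord l; move: e; case: eqP; case: eqP; lia.
- move=> k /(congr1 val); rewrite sgE /=; have := ltn_ord k; case: eqP; lia.
- move=> k /(congr1 val); rewrite !sgE /=; have := ltn_ord k; case: eqP; case: eqP; lia.
Qed.

Lemma sg3 n (H : 0 < n) (k : 'I_n) : 3 < n -> sg H (sg H (sg H k)) <> k.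
Proof.
move=> n4 /(congr1 val); rewrite !sgE /=; have := ltn_ord k.
case: eqP; case: eqP; case: eqP; lia.
Qed.

Lemma sg3' (H : 0 < 3) (k : 'I_3) : sg H (sg H (sg H k)) = k.
Proof.
apply: val_inj; rewrite !sgE /=; have := ltn_ord k.
case: eqP; case: eqP; case: eqP; lia.
Qed.

Lemma sun_abs n (H : 0 < n) (P : 'I_n + 'I_n -> seq point) :
  EPG_rep (sun_adj n) P -> (forall v, bends (P v) <= 1) ->
  exists X Y, Sun (sg H) X Y /\
    (forall i, (bends (P (inl i)) = 0 \/ monotonic (P (inl i))) -> mono (X i)).
Proof.
move=> [gp adjE] hb.
have ex v : exists Pv, rep (P v) Pv /\ corner Pv /\ (bends (P v) = 0 -> mono Pv) /\
    (monotonic (P v) -> mono Pv) := path_prm (gp v) (hb v).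
pose F v := proj1_sig (constructive_indefinite_description _ (ex v)).
have HF v : rep (P v) (F v) /\ corner (F v) /\ (bends (P v) = 0 -> mono (F v)) /\
    (monotonic (P v) -> mono (F v)) := proj2_sig (constructive_indefinite_description _ (ex v)).
have shF u v : u != v -> (sun_adj n u v <-> sh (F u) (F v)).
  move=> uv; rewrite (adjE u v uv); apply: share_sh.
  - by case/andP: (gp u).
  - by case/andP: (gp v).
  - exact: (proj1 (HF u)).
  - exact: (proj1 (HF v)).
exists (fun i => F (inl i)), (fun k => F (inr k)).
split; last first.
  by move=> i [h|h]; [apply: (proj1 (proj2 (proj2 (HF (inl i))))) | apply: (proj2 (proj2 (proj2 (HF (inl i)))))].
split; [|split; [|split; [|split]]].
- move=> i j ij.
  have uv : inl i != inl j :> 'I_n + 'I_n by apply/eqP => -[e]; exact: ij e.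
  apply/(shF _ _ uv) => /=; by apply/eqP.
- move=> k i.
  have uv : inr k != inl i :> 'I_n + 'I_n by [].
  rewrite -(shF _ _ uv) /= /inpair; split.
  + case/orP => /eqP e; [left | right]; apply: val_inj => /=; exact: e.
  + by case=> ->; rewrite ?eqxx //= orbT.
- move=> k l kl.
  have uv : inr k != inr l :> 'I_n + 'I_n by apply/eqP => -[e]; exact: kl e.
  by rewrite -(shF _ _ uv) /=.
- by move=> i; apply: (proj1 (proj2 (HF (inl i)))).
- by move=> i; apply: (proj1 (proj2 (HF (inr i)))).
Qed.

Lemma noB1 n : 3 < n -> ~ in_B 1 (sun_adj n).
Proof.
move=> n4 [P [rp hb]].
have H : 0 < n by lia.
case: (sun_abs H rp hb) => X [Y [HS _]].
apply: (@AbsMain _ (sg H) X Y (Ordinal H) HS (SigOK_sg H ltac:(lia))).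
by left => k; apply: sg3.
Qed.

Lemma noBm1_3 : ~ in_Bm 1 (sun_adj 3).
Proof.
move=> [P [rp hb]].
have H : 0 < 3 by [].
case: (sun_abs H rp (fun v => proj1 (hb v))) => X [Y [HS hm]].
apply: (@AbsMain _ (sg H) X Y (Ordinal H) HS (SigOK_sg H ltac:(lia))).
right; split; first exact: sg3'.
by move=> i; apply: hm; right; apply: (proj2 (hb (inl i))).
Qed.

Lemma noB0_3 : ~ in_B 0 (sun_adj 3).
Proof.
move=> [P [rp hb]].
have H : 0 < 3 by [].
have hb1 v : bends (P v) <= 1 by have := hb v; lia.
case: (sun_abs H rp hb1) => X [Y [HS hm]].
apply: (@AbsMain _ (sg H) X Y (Ordinal H) HS (SigOK_sg H ltac:(lia))).
right; split; first exact: sg3'.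
by move=> i; apply: hm; left; apply/eqP; rewrite -leqn0; exact: hb.
Qed.

Lemma in_B_le k k' (V : finType) (adj : rel V) : k <= k' -> in_B k adj -> in_B k' adj.
Proof. by move=> kk [P [H1 H2]]; exists P; split => // v; apply: leq_trans (H2 v) kk. Qed.

Lemma in_Bm_le k k' (V : finType) (adj : rel V) : k <= k' -> in_Bm k adj -> in_Bm k' adj.
Proof.
move=> kk [P [H1 H2]]; exists P; split => // v.
by case: (H2 v) => a b; split => //; apply: leq_trans a kk.
Qed.

Lemma in_Bm_B k (V : finType) (adj : rel V) : in_Bm k adj -> in_B k adj.
Proof. by move=> [P [H1 H2]]; exists P; split => // v; case: (H2 v). Qed.

Theorem corollary3p9 :
  bend_number (sun_adj 3) 1 /\
  (forall n : nat, 4 <= n -> bend_number (sun_adj n) 2) /\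
  (forall n : nat, 3 <= n -> mono_bend_number (sun_adj n) 2).
Proof.
split; [|split].
- split; first exact: B1_3.
  move=> [|j] // _; exact: noB0_3.
- move=> n n4; split; first by apply: in_Bm_B; apply: B2m; lia.
  move=> j j2 H; apply: (noB1 (n := n)); first lia.
  by apply: (in_B_le _ H); lia.
- move=> n n3; split; first by apply: B2m; lia.
  move=> j j2 H; have H1 : in_Bm 1 (sun_adj n) by apply: (in_Bm_le _ H); lia.
  case: (n =P 3) => [e|ne].
  + by subst n; apply: noBm1_3.
  + apply: (noB1 (n := n)); first lia.
    exact: in_Bm_B.
Qed.
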